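(* Let $F$ be a minimally unsatisfiable clause-set and $v$ a singular variable for $F$ with singular literal $x$, main clause $C$ and side clauses $D_1,\dots,D_m$. Let $F'$ be obtained from $F$ by replacing each $D_i$ by $D_i \cup (C\setminus\{x\})$ ($i=1,\dots,m$). Then each $D_i\cup(C\setminus\{x\})$ is a clause (contains no complementary pair), and $F'$ is a partial saturation of $F$.
   Context: Literals are variables $v$ and complements $\overline{v}$; a clause is a finite set of literals with no complementary pair; a clause-set is a finite set of clauses; $\mathrm{var}(F)$ is the set of variables of $F$; $\mathrm{ldeg}_F(x)$ is the number of clauses of $F$ containing literal $x$. $\mathrm{MU}$ is the set of minimally unsatisfiable clause-sets. A variable $v$ is singular for $F$ if $\min(\mathrm{ldeg}_F(v),\mathrm{ldeg}_F(\overline{v}))=1$; a singular literal for $v$ is a literal $x$ with $\mathrm{var}(x)=v$ and $\mathrm{ldeg}_F(x)=1$ (if both polarities qualify, one is chosen); the main clause is the unique $C\in F$ with $x\in C$, and the side clauses are the clauses $D\in F$ with $\overline{x}\in D$. A partial saturation of $F\in\mathrm{MU}$ is a clause-set $F'\in\mathrm{MU}$ with $\mathrm{var}(F')=\mathrm{var}(F)$ such that there is a bijection $\alpha:F\to F'$ with $C\subseteq\alpha(C)$ for all $C\in F$. *)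

(* Defs.v *)
From HB Require Import structures.
From mathcomp Require Import all_boot.
From mathcomp Require Import finmap.

Set Implicit Arguments.
Unset Strict Implicit.
Unset Printing Implicit Defensive.

Local Open Scope fset_scope.

(* Variables are natural numbers; a literal is a pair (v, b):
   (v, true) is the positive literal v, (v, false) its complement. *)
Definition var := nat.
Definition lit := (nat * bool)%type.

Definition var_of (l : lit) : var := l.1.
Definition compl (l : lit) : lit := (l.1, ~~ l.2).

Definition is_clause (C : {fset lit}) : Prop :=
  forall l, l \in C -> compl l \notin C.

Definition is_clause_set (F : {fset {fset lit}}) : Prop :=
  forall C, C \in F -> is_clause C.

Definition var_in (F : {fset {fset lit}}) (v : var) : Prop :=
  exists2 C, C \in F & exists2 l, l \in C & var_of l = v.

Definition ldeg (F : {fset {fset lit}}) (x : lit) : nat :=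
  #|` [fset C in F | x \in C] |.

Definition sat (F : {fset {fset lit}}) : Prop :=
  exists phi : var -> bool,
    forall C, C \in F -> exists2 l, l \in C & phi l.1 = l.2.

Definition MU (F : {fset {fset lit}}) : Prop :=
  [/\ is_clause_set F, ~ sat F & forall C, C \in F -> sat (F `\ C)].

Definition singular (F : {fset {fset lit}}) (v : var) : Prop :=
  minn (ldeg F (v, true)) (ldeg F (v, false)) = 1.

Definition side_clauses (F : {fset {fset lit}}) (x : lit) : {fset {fset lit}} :=
  [fset D in F | compl x \in D].

Definition partial_saturation (F F' : {fset {fset lit}}) : Prop :=
  [/\ MU F',
      (forall v, var_in F' v <-> var_in F v) &
      exists alpha : {fset lit} -> {fset lit},
        [/\ {in F &, injective alpha},
            [fset alpha C | C in F] = F' &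
            forall C, C \in F -> C `<=` alpha C]].

(* Main.v *)
Require Import Defs.
From HB Require Import structures.
From mathcomp Require Import all_boot.
From mathcomp Require Import finmap.
From Stdlib Require Import Classical.

Set Implicit Arguments.
Unset Strict Implicit.
Local Open Scope fset_scope.

Definition tr (phi : var -> bool) (l : lit) : bool := phi l.1 == l.2.

Lemma tr_compl phi l : tr phi (compl l) = ~~ tr phi l.
Proof. by case: l => a [] ; rewrite /tr /=; case: (phi a). Qed.

Lemma var_eq (l x : lit) : l.1 = x.1 -> l = x \/ l = compl x.
Proof. by case: l x => a b [c d] /= ->; case: b; case: d; auto. Qed.

Definition flip (phi : var -> bool) (w : var) (b : bool) :=
  fun u => if u == w then b else phi u.

Lemma tr_flip_ne phi w b l : l.1 != w -> tr (flip phi w b) l = tr phi l.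
Proof. by rewrite /tr /flip => /negbTE ->. Qed.

Lemma tr_flip_compl phi (x : lit) : tr (flip phi x.1 (~~ x.2)) (compl x).
Proof. by rewrite /tr /flip eqxx. Qed.

Lemma satP (F : {fset {fset lit}}) phi :
  (forall E, E \in F -> exists2 l, l \in E & tr phi l) -> sat F.
Proof.
move=> H; exists phi => E /H [l lE /eqP tl]; by exists l.
Qed.

Lemma sideP F x D : (D \in side_clauses F x) = (D \in F) && (compl x \in D).
Proof. by rewrite /side_clauses !inE. Qed.

Section Main.
Variables (F : {fset {fset lit}}) (x : lit) (C : {fset lit}).
Hypotheses (HF : is_clause_set F) (Hunsat : ~ sat F)
  (Hmin : forall E, E \in F -> sat (F `\ E))
  (Hx1 : ldeg F x = 1) (HC : C \in F) (HxC : x \in C).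

Lemma uniqC E : E \in F -> x \in E -> E = C.
Proof.
move=> EF xE; apply/eqP; apply/negPn/negP => nEC.
move: Hx1; rewrite /ldeg (cardfsD1 C) .
have -> : C \in [fset C0 in F | x \in C0] by rewrite !inE HC HxC.
move=> [] /cardfs0_eq H.
have : E \in [fset C0 in F | x \in C0] `\ C by rewrite !inE nEC EF xE.
by rewrite H inE.
Qed.

Lemma notcx : compl x \notin C.
Proof. exact: HF HC x HxC. Qed.

Lemma C_var l : l \in C -> l != x -> l.1 != x.1.
Proof.
move=> lC nlx; apply/eqP => e; case: (var_eq e) => e'.
  by rewrite e' eqxx in nlx.
by move: notcx; rewrite -e' lC.
Qed.

Lemma keyK D : D \in F -> compl x \in D -> exists psi,
  [/\ forall l, l \in D -> ~~ tr psi l,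
      forall E, E \in F -> E != D -> exists2 l, l \in E & tr psi l &
      forall l, l \in C -> l != x -> ~~ tr psi l].
Proof.
move=> DF cxD; case: (Hmin DF) => psi Hpsi.
have H2 : forall E, E \in F -> E != D -> exists2 l, l \in E & tr psi l.
  move=> E EF nED; have : E \in F `\ D by rewrite in_fsetD1 nED EF.
  by move/Hpsi => [l lE e]; exists l => //; rewrite /tr e.
have H1 : forall l, l \in D -> ~~ tr psi l.
  move=> l lD; apply/negP => tl; apply: Hunsat; apply: (satP (phi := psi)).
  move=> E EF; case: (eqVneq E D) => [->|nED]; first by exists l.
  exact: H2.
exists psi; split => // l0 l0C nl0x; apply/negP => tl0; apply: Hunsat.
apply: (satP (phi := flip psi x.1 (~~ x.2))) => E EF.
case: (eqVneq E C) => [->|nEC].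
  by exists l0 => //; rewrite tr_flip_ne // C_var.
case: (eqVneq E D) => [->|nED]; first by exists (compl x) => //; apply: tr_flip_compl.
case: (H2 E EF nED) => l lE tl.
case: (eqVneq l.1 x.1) => [e|ne]; last by exists l => //; rewrite tr_flip_ne.
case: (var_eq e) => e'.
  by move: nEC; rewrite (uniqC EF) -?e' ?eqxx.
by exists (compl x) => //; [rewrite -e' | apply: tr_flip_compl].
Qed.


Definition alpha (E : {fset lit}) :=
  if compl x \in E then E `|` (C `\ x) else E.

Lemma clauseU D : D \in F -> compl x \in D -> is_clause (D `|` (C `\ x)).
Proof.
move=> DF cxD; case: (keyK DF cxD) => psi [H1 _ H3].
have H3' : forall l, l \in C `\ x -> ~~ tr psi l.
  by move=> l; rewrite in_fsetD1 => /andP [nlx lC]; apply: H3.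
move=> l; rewrite !in_fsetU => /orP [lD|lC']; apply/negP => /orP [cD|cC'].
- by move: (HF DF lD); rewrite cD.
- by move: (H3' _ cC'); rewrite tr_compl (H1 _ lD).
- by move: (H1 _ cD); rewrite tr_compl (H3' _ lC').
- move: lC' cC'; rewrite !in_fsetD1 => /andP [_ lC] /andP [_ cC].
  by move: (HF HC lC); rewrite cC.
Qed.

Lemma sub_alpha E : E `<=` alpha E.
Proof. by rewrite /alpha; case: ifP => _; rewrite ?fsubsetUl ?fsubset_refl. Qed.

Lemma good E : E \in F -> exists psi,
  forall G, G \in F -> G != E -> exists2 l, l \in G & tr psi l.
Proof.
move=> EF; case cxE: (compl x \in E).
  by case: (keyK EF cxE) => psi [_ H2 _]; exists psi.
case: (Hmin EF) => psi Hpsi; exists psi => G GF nGE.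
have : G \in F `\ E by rewrite in_fsetD1 nGE GF.
by move/Hpsi => [l lE e]; exists l => //; rewrite /tr e.
Qed.

Lemma alpha_inj : {in F &, injective alpha}.
Proof.
move=> E1 E2 E1F E2F; rewrite /alpha.
case c1: (compl x \in E1); case c2: (compl x \in E2) => // e.
- apply/eqP; apply/negPn/negP => ne.
  case: (keyK E1F c1) => psi [H1 H2 H3].
  case: (H2 _ E2F); first by rewrite eq_sym.
  move=> l lE2 tl.
  have : l \in E1 `|` (C `\ x) by rewrite e in_fsetU lE2.
  rewrite in_fsetU in_fsetD1 => /orP [/H1|/andP [nlx lC]]; first by rewrite tl.
  by move: (H3 _ lC nlx); rewrite tl.
  by move: c2; rewrite -e !in_fsetU c1 /=. 
  by move: c1; rewrite e !in_fsetU c2 /=. 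
Qed.

Lemma imageF' : [fset alpha E | E in F] =
  (F `\` side_clauses F x) `|` [fset D `|` (C `\ x) | D in side_clauses F x].
Proof.
apply/fsetP => y; rewrite in_fsetU in_fsetD.
apply/imfsetP/orP.
- move=> [E EF ->]; rewrite /alpha; case cxE: (compl x \in E).
    right; apply/imfsetP; exists E => //; by rewrite !inE EF cxE.
  by left; rewrite !inE EF cxE.
- move=> [/andP [yS yF]|/imfsetP [D DS ->]].
    exists y => //; rewrite /alpha; case: ifP => // cy.
    by move: yS; rewrite !inE yF cy.
  move: DS; rewrite !inE => /andP [DF cD]; exists D => //.
  by rewrite /alpha cD.
Qed.

End Main.

Theorem corollary11 (F : {fset {fset lit}}) (v : var) (x : lit) (C : {fset lit}) :
  MU F ->
  singular F v ->
  var_of x = v -> ldeg F x = 1 ->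
  C \in F -> x \in C ->
  let F' := (F `\` side_clauses F x) `|`
            [fset D `|` (C `\ x) | D in side_clauses F x] in
  (forall D, D \in side_clauses F x -> is_clause (D `|` (C `\ x))) /\
  partial_saturation F F'.
Proof.
move=> [HF Hunsat Hmin] _ _ Hx1 HC HxC F'.
split.
  by move=> D; rewrite sideP => /andP [DF cD]; exact: (clauseU HF Hunsat Hmin Hx1 HC HxC DF cD).
have Him : [fset alpha x C E | E in F] =
  (F `\` side_clauses F x) `|` [fset D `|` (C `\ x) | D in side_clauses F x].
  by apply: imageF'.
rewrite /partial_saturation /F' -Him.
have subA : forall E, E `<=` alpha x C E by move=> E; apply: sub_alpha.
split.
- split.
  + move=> E' /imfsetP [E EF ->]; rewrite /alpha; case: ifP => cE.
      exact: (clauseU HF Hunsat Hmin Hx1 HC HxC EF cE).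
    exact: HF.
  + move=> [phi Hphi].
    have Hphi' : forall E, E \in F -> exists2 l, l \in alpha x C E & tr phi l.
      move=> E EF; case: (Hphi (alpha x C E)); first by apply: in_imfset.
      by move=> l lE e; exists l => //; rewrite /tr e.
    case: (classic (exists2 l0, l0 \in C `\ x & tr phi l0)).
    * move=> [l0]; rewrite in_fsetD1 => /andP [nl0x l0C] tl0; apply: Hunsat.
      apply: (satP (phi := flip phi x.1 (~~ x.2))) => E EF.
      case: (eqVneq E C) => [->|nEC].
        exists l0 => //; rewrite tr_flip_ne //; exact: (C_var HF HC HxC).
      case cE: (compl x \in E); first by exists (compl x) => //; apply: tr_flip_compl.
      case: (Hphi' E EF); rewrite /alpha cE => l lE tl.
      case: (eqVneq l.1 x.1) => [e|ne]; last by exists l => //; rewrite tr_flip_ne.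
      case: (var_eq e) => e'.
        by move: nEC; rewrite (uniqC Hx1 HC HxC EF) -?e' ?eqxx.
      by move: cE; rewrite -e' lE.
    * move=> nex; apply: Hunsat; apply: (satP (phi := phi)) => E EF.
      case: (Hphi' E EF); rewrite /alpha; case: ifP => cE l lE tl; last by exists l.
      move: lE; rewrite in_fsetU => /orP [lE|lC]; first by exists l.
      by case: nex; exists l.
  + move=> E' /imfsetP [E EF ->].
    case: (good HF Hunsat Hmin Hx1 HC HxC EF) => psi Hpsi.
    exists psi => G'; rewrite in_fsetD1 => /andP [ne /imfsetP [G GF eG]].
    subst G'.
    have nGE : G != E by apply/eqP => e; move: ne; rewrite e eqxx.
    case: (Hpsi G GF nGE) => l lG /eqP tl.
    by exists l => //; apply: (fsubsetP (subA G)).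
- move=> w; split.
  + move=> [E' /imfsetP [E EF ->] [l lE' vl]].
    move: lE'; rewrite /alpha; case: ifP => cE lE.
      move: lE; rewrite in_fsetU in_fsetD1 => /orP [lE|/andP [_ lC]].
        by exists E => //; exists l.
      by exists C => //; exists l.
    by exists E => //; exists l.
  + move=> [E EF [l lE vl]]; exists (alpha x C E); first by apply: in_imfset.
    by exists l => //; apply: (fsubsetP (subA E)).
- exists (alpha x C); split => //.
  exact: (alpha_inj HF Hunsat Hmin Hx1 HC HxC).
Qed.
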